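(* Let $\Lambda$ be a $d$-partition of $\{1,\dots,N\}$ and let $r^{(n)}_N(x,z)=\mathbb P^\circ(X_N(n)=z\mid X_N(0)=x)$ denote the $n$-step transition probabilities of the associated lumped chain. (i) For all $0<n\le N$, all $x\in\mathcal S_d$ and all $z\in\Gamma_{N,d}$ with $\mathrm{dist}(x,z)=n$, $$r^{(n)}_N(x,z)=\frac{n!}{N^n}\frac{\mathbb Q_N(z)}{\mathbb Q_N(x)}.$$ (ii) Let $n\ge0$, let $m\ge1$ be such that $p=(n+2-m)/2$ is a nonnegative integer. Then for all $x\in\mathcal S_d$ and all $z\in\Gamma_{N,d}$ with $\mathrm{dist}(x,z)=m$, $$r^{(n+2)}_N(x,z)\le r^{(m)}_N(x,z)\frac1{N^p}\frac{(m+2p)!}{m!\,p!}.$$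
   Context: Let $(\sigma_N(t))$ be the discrete-time simple random walk on $\{-1,1\}^N$ (jump to each Hamming neighbour with probability $1/N$). For a partition $\Lambda$ of $\{1,\dots,N\}$ into nonempty classes $\Lambda_1,\dots,\Lambda_d$, let $\gamma_k(\sigma)=|\Lambda_k|^{-1}\sum_{i\in\Lambda_k}\sigma_i$, $\gamma=(\gamma_1,\dots,\gamma_d)$, $\Gamma_{N,d}=\gamma(\{-1,1\}^N)$, $\mathcal S_d=\{-1,1\}^d$. The lumped chain $X_N(t)=\gamma(\sigma_N(t))$ is a Markov chain on $\Gamma_{N,d}$ with transition probabilities $r_N(x,x+s\frac2{|\Lambda_k|}u_k)=\frac{|\Lambda_k|}N\frac{1-sx_k}2$ ($s=\pm1$, $u_k$ canonical basis) and reversible measure $\mathbb Q_N(x)=2^{-N}\prod_k\binom{|\Lambda_k|}{|\Lambda_k|(1+x_k)/2}$. $\mathrm{dist}(x,y)=\sum_k\frac{|\Lambda_k|}2|x_k-y_k|$. *)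

(* Defs.v *)
From mathcomp Require Import all_boot all_order all_algebra.
Set Implicit Arguments. Unset Strict Implicit. Unset Printing Implicit Defensive.
Import Order.TTheory GRing.Theory Num.Theory.
Local Open Scope ring_scope.

(* A d-partition Lambda of {1..N} is encoded by lam : 'I_N -> 'I_d,
   Lambda_k = lam^{-1}(k) (nonemptiness is a hypothesis of the theorem).
   Spins sigma in {-1,1}^N are {ffun 'I_N -> bool} (true = +1). *)

Section Lumped.
Variables (R : archiRealFieldType) (N d : nat) (lam : 'I_N -> 'I_d).

Definition spin (b : bool) : R := if b then 1 else -1.

Definition cls (k : 'I_d) : nat := #|[set i | lam i == k]|.

Definition gamma (sigma : {ffun 'I_N -> bool}) : {ffun 'I_d -> R} :=
  [ffun k => (cls k)%:R^-1 * \sum_(i | lam i == k) spin (sigma i)].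

Definition GammaNd : seq {ffun 'I_d -> R} :=
  undup [seq gamma s | s <- enum {: {ffun 'I_N -> bool}}].

Definition inSd (x : {ffun 'I_d -> R}) : bool :=
  [forall k, (x k == 1) || (x k == -1)].

Definition shift (x : {ffun 'I_d -> R}) (k : 'I_d) (c : R) : {ffun 'I_d -> R} :=
  [ffun j => x j + (if j == k then c else 0)].

Definition rN (x y : {ffun 'I_d -> R}) : R :=
  \sum_(k < d) \sum_(b : bool)
     if y == shift x k (spin b * (2 / (cls k)%:R))
     then (cls k)%:R / N%:R * ((1 - spin b * x k) / 2) else 0.

Fixpoint rNn (n : nat) (x z : {ffun 'I_d -> R}) : R :=
  match n with
  | 0 => (x == z)%:R
  | n'.+1 => \sum_(y <- GammaNd) rN x y * rNn n' y z
  end.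

Definition QN (x : {ffun 'I_d -> R}) : R :=
  (2%:R ^+ N)^-1 *
  \prod_(k < d) ('C(cls k, Num.truncn ((cls k)%:R * (1 + x k) / 2)))%:R.

Definition distN (x y : {ffun 'I_d -> R}) : R :=
  \sum_(k < d) (cls k)%:R / 2 * `|x k - y k|.

End Lumped.

(* Main.v *)
Require Import Defs.
From mathcomp Require Import all_boot all_order all_algebra.
From mathcomp Require Import ring lra zify.
Import Order.TTheory GRing.Theory Num.Theory.
Local Open Scope ring_scope.
Set Implicit Arguments. Unset Strict Implicit. Unset Printing Implicit Defensive.

Lemma sum_pick (R : archiRealFieldType) (T : eqType) (s : seq T) (a : T) (F : T -> R) :
  uniq s -> \sum_(y <- s) (if y == a then F y else 0) = if a \in s then F a else 0.
Proof.
move=> us; case: ifP => ins.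
  rewrite (bigD1_seq a) //= eqxx big1 ?addr0 //.
  by move=> y /negbTE ->.
by rewrite big1_seq // => y /andP[_ ys]; case: eqP => // ya; rewrite -ya ys in ins.
Qed.

Section Gen.
Variables (R : archiRealFieldType) (N d : nat) (lam : 'I_N -> 'I_d).
Hypothesis Hpart : forall k : 'I_d, exists i : 'I_N, lam i = k.
Local Notation L k := (cls lam k).
Local Notation GG := (GammaNd R lam).
Local Notation sp := (spin R).

Lemma clsE k : L k = (\sum_(i | lam i == k) 1)%N.
Proof. by rewrite /cls -sum1_card; apply: eq_bigl => i; rewrite inE. Qed.

Lemma cls_gt0 k : (0 < L k)%N.
Proof. have [i hi] := Hpart k; apply/card_gt0P; exists i; by rewrite inE hi. Qed.

Lemma cls_neq0 k : (L k)%:R != 0 :> R.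
Proof. by rewrite pnatr_eq0 -lt0n cls_gt0. Qed.

Lemma sum_cls : (\sum_k L k)%N = N.
Proof.
under eq_bigr do rewrite clsE.
rewrite (exchange_big_dep xpredT) //=.
rewrite -[N in RHS]card_ord -sum1_card.
by apply: eq_bigr => i _; rewrite (big_pred1 (lam i)) // => k; rewrite eq_sym.
Qed.

Lemma uniqG : uniq GG.
Proof. exact: undup_uniq. Qed.

Lemma memG z : z \in GG -> exists s, z = gamma R lam s.
Proof. by rewrite mem_undup => /mapP [s _ ->]; exists s. Qed.

Lemma gammaG s : gamma R lam s \in GG.
Proof. by rewrite mem_undup; apply: map_f; rewrite mem_enum. Qed.

Definition cp (s : {ffun 'I_N -> bool}) k := (\sum_(i | lam i == k) (s i : nat))%N.

Lemma cp_le (s : {ffun 'I_N -> bool}) k : (cp s k <= L k)%N.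
Proof. by rewrite clsE /cp; apply: leq_sum => i _; case: (s i). Qed.

Lemma spinE b : sp b = 2 * (b : nat)%:R - 1.
Proof. by case: b => /=; rewrite ?mulr1 ?mulr0; lra. Qed.

Lemma spin_sum (s : {ffun 'I_N -> bool}) k : \sum_(i | lam i == k) sp (s i) = 2 * (cp s k)%:R - (L k)%:R.
Proof.
under eq_bigr do rewrite spinE.
rewrite big_split /= sumrN -mulr_sumr /cp clsE !natr_sum; congr (_ * _ - _).
 
Qed.

Lemma gammaE (s : {ffun 'I_N -> bool}) k : gamma R lam s k = (2 * (cp s k)%:R - (L k)%:R) / (L k)%:R.
Proof. by rewrite /gamma ffunE spin_sum mulrC. Qed.

Lemma Gform z k : z \in GG -> exists c, (c <= L k)%N /\ z k = (2 * c%:R - (L k)%:R) / (L k)%:R.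
Proof. move=> /memG [s ->]; exists (cp s k); split; [exact: cp_le | exact: gammaE]. Qed.

Lemma shiftK (y : {ffun 'I_d -> R}) k c : shift (shift y k c) k (- c) = y.
Proof. by apply/ffunP => j; rewrite !ffunE; case: (j == k); rewrite ?addr0 // addrK. Qed.

Lemma shift_eq (y z : {ffun 'I_d -> R}) k c : (z == shift y k c) = (y == shift z k (- c)).
Proof.
apply/eqP/eqP => [->|->]; first by rewrite shiftK.
by rewrite -{2}(opprK c) shiftK.
Qed.

Lemma CK t (x z : {ffun 'I_d -> R}) : x \in GG -> z \in GG ->
  rNn lam t.+1 x z = \sum_(y <- GG) rNn lam t x y * rN lam y z.
Proof.
elim: t x => [|t IH] x xG zG.
  rewrite /= (eq_bigr (fun y => if y == z then rN lam x y else 0)); last first.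
    by move=> y _; case: eqP; rewrite ?mulr1 ?mulr0.
  rewrite sum_pick ?uniqG // zG.
  rewrite (eq_bigr (fun y => if y == x then rN lam y z else 0)); last first.
    by move=> y _; rewrite eq_sym; case: eqP; rewrite ?mul1r ?mul0r.
  by rewrite sum_pick ?uniqG // xG.
have -> : rNn lam t.+2 x z = \sum_(y <- GG) rN lam x y * rNn lam t.+1 y z by [].
rewrite (eq_big_seq (fun y => \sum_(w <- GG) rN lam x y * (rNn lam t y w * rN lam w z))); last first.
  by move=> y yG; rewrite IH // mulr_sumr.
rewrite exchange_big /=; apply: eq_bigr => w _.
by rewrite mulr_suml; apply: eq_bigr => y _; rewrite mulrA.
Qed.

Definition pk k b (y : {ffun 'I_d -> R}) : R :=
  (L k)%:R / N%:R * ((1 - sp b * y k) / 2).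
Definition wk (z : {ffun 'I_d -> R}) k b := shift z k (- (sp b * (2 / (L k)%:R))).

Lemma STEP (f : {ffun 'I_d -> R} -> R) z :
  \sum_(y <- GG) f y * rN lam y z =
  \sum_k \sum_b (if wk z k b \in GG then f (wk z k b) * pk k b (wk z k b) else 0).
Proof.
rewrite /rN.
under eq_bigr do rewrite mulr_sumr.
rewrite exchange_big /=; apply: eq_bigr => k _.
under eq_bigr do rewrite mulr_sumr.
rewrite exchange_big /=; apply: eq_bigr => b _.
rewrite -(@sum_pick _ _ _ _ (fun y => f y * pk k b y)) ?uniqG //; apply: eq_bigr => y _.
rewrite shift_eq; case: ifP; rewrite ?mulr0 //.
Qed.


Lemma sum_const_cls (c : R) k : \sum_(i | lam i == k) c = (L k)%:R * c.
Proof. by rewrite clsE natr_sum mulr_suml; apply: eq_bigr => i _; rewrite mul1r. Qed.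

Lemma spinN b : sp (~~ b) = - sp b.
Proof. by case: b => /=; rewrite ?opprK. Qed.

Lemma spin_pm b : sp b = 1 \/ sp b = -1.
Proof. by case: b; [left|right]. Qed.

Variables (x : {ffun 'I_d -> R}) (hx : inSd x).

Lemma xpm k : x k = 1 \/ x k = -1.
Proof. by move/forallP: hx => /(_ k) /orP [/eqP|/eqP]; [left|right]. Qed.

Lemma xsq k : x k * x k = 1.
Proof. by case: (xpm k) => ->; rewrite ?mulrNN ?mulr1. Qed.

Lemma xG : x \in GG.
Proof.
have -> : x = gamma R lam [ffun i => x (lam i) == 1]; last exact: gammaG.
apply/ffunP => k; rewrite /gamma ffunE.
rewrite (eq_bigr (fun _ => x k)); last first.
  have n1 : (-1 == 1 :> R) = false by apply/eqP => h; lra.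
  by move=> i /eqP <-; rewrite ffunE; case: (xpm (lam i)) => ->; rewrite ?eqxx ?n1.
by rewrite sum_const_cls mulrA mulVf ?cls_neq0 // mul1r.
Qed.

Definition a (z : {ffun 'I_d -> R}) k := Num.truncn ((L k)%:R * (1 - x k * z k) / 2).

Lemma aE z k : z \in GG -> ((a z k)%:R = (L k)%:R * (1 - x k * z k) / 2) /\ (a z k <= L k)%N.
Proof.
rewrite /a; move=> /(Gform k) [c [cle ->]].
have L0 := cls_neq0 k.
case: (xpm k) => ->.
  have E : (L k)%:R * (1 - 1 * ((2 * c%:R - (L k)%:R) / (L k)%:R)) / 2 = (L k - c)%:R :> R.
    by rewrite natrB //; field.
  by rewrite E natrK; split => //; apply: leq_subr.
have E : (L k)%:R * (1 - -1 * ((2 * c%:R - (L k)%:R) / (L k)%:R)) / 2 = c%:R :> R.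
  by field.
by rewrite E natrK.
Qed.

Lemma aC z k : z \in GG -> 'C(L k, Num.truncn ((L k)%:R * (1 + z k) / 2)) = 'C(L k, a z k).
Proof.
rewrite /a; move=> /(Gform k) [c [cle ->]].
have L0 := cls_neq0 k.
have E0 : (L k)%:R * (1 + ((2 * c%:R - (L k)%:R) / (L k)%:R)) / 2 = c%:R :> R by field.
rewrite E0 natrK.
case: (xpm k) => ->.
  have E : (L k)%:R * (1 - 1 * ((2 * c%:R - (L k)%:R) / (L k)%:R)) / 2 = (L k - c)%:R :> R.
    by rewrite natrB //; field.
  by rewrite E natrK bin_sub.
have E : (L k)%:R * (1 - -1 * ((2 * c%:R - (L k)%:R) / (L k)%:R)) / 2 = c%:R :> R.
  by field.
by rewrite E natrK.
Qed.

Lemma a_x k : a x k = 0%N.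
Proof. by rewrite /a xsq subrr mulr0 mul0r truncn0. Qed.

Definition D z := (\sum_k a z k)%N.
Definition Cn z := (\prod_k 'C(L k, a z k))%N.

Lemma D_x : D x = 0%N.
Proof. by rewrite /D big1 // => k _; rewrite a_x. Qed.

Lemma Cn_gt0 z : z \in GG -> (0 < Cn z)%N.
Proof. by move=> zG; rewrite /Cn prodn_gt0 // => k; rewrite bin_gt0; case: (aE k zG). Qed.

Lemma a_other z k b j : j != k -> a (wk z k b) j = a z j.
Proof. by move=> jk; rewrite /a /wk /shift ffunE (negbTE jk) addr0. Qed.

Lemma a_wk_real z k b : z \in GG -> wk z k b \in GG ->
  (a (wk z k b) k)%:R = (a z k)%:R + x k * sp b :> R.
Proof.
move=> zG wG; case: (aE k zG) => -> _; case: (aE k wG) => -> _.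
rewrite /wk /shift ffunE eqxx.
have L0 := cls_neq0 k.
by field.
Qed.

Lemma a_far z k b : z \in GG -> wk z k b \in GG -> x k * sp b = 1 ->
  a (wk z k b) k = (a z k).+1.
Proof.
move=> zG wG e; apply/eqP; rewrite -(eqr_nat R) a_wk_real // e.
by rewrite -addn1 natrD.
Qed.

Lemma a_near z k b : z \in GG -> wk z k b \in GG -> x k * sp b = -1 ->
  (a (wk z k b) k).+1 = a z k.
Proof.
move=> zG wG e; apply/eqP; rewrite -(eqr_nat R) -addn1 natrD a_wk_real // e.
by rewrite addrNK.
Qed.

Lemma spb_far k b : x k * sp b = 1 -> sp b = x k.
Proof. by move=> e; rewrite -[sp b]mul1r -(xsq k) -mulrA e mulr1. Qed.

Lemma spb_near k b : x k * sp b = -1 -> sp b = - x k.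
Proof. by move=> e; rewrite -[sp b]mul1r -(xsq k) -mulrA e mulrN1. Qed.

Lemma pk_far z k b : wk z k b \in GG -> x k * sp b = 1 ->
  pk k b (wk z k b) = (a (wk z k b) k)%:R / N%:R.
Proof.
move=> wG e; case: (aE k wG) => -> _; rewrite /pk (spb_far e).
by ring.
Qed.

Lemma pk_near z k b : wk z k b \in GG -> x k * sp b = -1 ->
  pk k b (wk z k b) = (L k - a (wk z k b) k)%:R / N%:R.
Proof.
move=> wG e; case: (aE k wG) => E le; rewrite natrB // E /pk (spb_near e).
rewrite mulrC mulrA; congr (_ * _).
by rewrite mulNr opprK; field.
Qed.


Lemma Cn_split z k : Cn z = ('C(L k, a z k) * \prod_(j | j != k) 'C(L j, a z j))%N.
Proof. by rewrite /Cn (bigD1 k). Qed.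

Lemma rest_eq z k b : (\prod_(j | j != k) 'C(L j, a (wk z k b) j))%N = (\prod_(j | j != k) 'C(L j, a z j))%N.
Proof. by apply: eq_bigr => j jk; rewrite a_other. Qed.

Lemma Cn_far z k b : a (wk z k b) k = (a z k).+1 ->
  (Cn (wk z k b) * a (wk z k b) k = Cn z * (L k - a z k))%N.
Proof.
move=> E; rewrite !(Cn_split _ k) rest_eq E.
have := mul_bin_left (L k) (a z k).
set r := (\prod_(j | j != k) _)%N; move=> H.
rewrite mulnAC [X in (X * r)%N]mulnC H; ring.
Qed.

Lemma Cn_near z k b : (a (wk z k b) k).+1 = a z k ->
  (Cn (wk z k b) * (L k - a (wk z k b) k) = Cn z * a z k)%N.
Proof.
move=> E; rewrite !(Cn_split _ k) rest_eq -E.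
have := mul_bin_left (L k) (a (wk z k b) k).
set r := (\prod_(j | j != k) _)%N; move=> H.
rewrite mulnAC [X in (X * r)%N]mulnC -H; ring.
Qed.

Lemma D_split z k : D z = (a z k + \sum_(j | j != k) a z j)%N.
Proof. by rewrite /D (bigD1 k). Qed.

Lemma restD_eq z k b : (\sum_(j | j != k) a (wk z k b) j)%N = (\sum_(j | j != k) a z j)%N.
Proof. by apply: eq_bigr => j jk; rewrite a_other. Qed.

Lemma D_far z k b : a (wk z k b) k = (a z k).+1 -> D (wk z k b) = (D z).+1.
Proof. by move=> E; rewrite !(D_split _ k) restD_eq E. Qed.

Lemma D_near z k b : (a (wk z k b) k).+1 = a z k -> (D (wk z k b)).+1 = D z.
Proof. by move=> E; rewrite !(D_split _ k) restD_eq -E. Qed.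

Lemma distE z : z \in GG -> distN lam x z = (D z)%:R.
Proof.
move=> zG; rewrite /distN /D natr_sum; apply: eq_bigr => k _.
case: (aE k zG) => E _; rewrite E.
have ge : 0 <= 1 - x k * z k.
  have h0 : 0 <= (a z k)%:R :> R by [].
  rewrite E in h0; have Lp : 0 < (L k)%:R :> R by rewrite ltr0n cls_gt0.
  have i2 : 0 < 2^-1 :> R by rewrite invr_gt0.
  by rewrite (pmulr_lge0 _ i2) (pmulr_rge0 _ Lp) in h0.
have -> : x k - z k = x k * (1 - x k * z k).
  by rewrite mulrBr mulr1 mulrA xsq mul1r.
rewrite normrM (ger0_norm ge).
have -> : `|x k| = 1 by case: (xpm k) => ->; rewrite ?normrN normr1.
by rewrite mul1r mulrAC.
Qed.

Lemma QNE z : z \in GG -> QN lam z = (2%:R ^+ N)^-1 * (Cn z)%:R.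
Proof.
move=> zG; rewrite /QN /Cn natr_prod; congr (_ * _).
by apply: eq_bigr => k _; rewrite aC.
Qed.

Lemma near_in z k b : z \in GG -> x k * sp b = -1 -> (0 < a z k)%N -> wk z k b \in GG.
Proof.
move=> zG e apos; have [s zs] := memG zG.
case: (boolP [exists i, (lam i == k) && (sp (s i) != x k)]) => [/existsP [i /andP [/eqP lik sne]]|].
  set s' := [ffun j => if j == i then ~~ s i else s j].
  suff -> : wk z k b = gamma R lam s' by apply: gammaG.
  have spi : sp (s i) = - x k.
    by case: (spin_pm (s i)) sne; case: (xpm k) => -> -> //; rewrite ?opprK ?eqxx.
  apply/ffunP => j; rewrite zs /wk /shift /gamma !ffunE.
  case: (eqVneq j k) => [->|jk].
    have L0 := cls_neq0 k.
    rewrite (bigD1 i) /=; last by rewrite lik.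
    rewrite [in RHS](bigD1 i) /=; last by rewrite lik.
    rewrite /s' ffunE eqxx spinN spi opprK (spb_near e).
    rewrite [in RHS](eq_bigr (fun l => sp (s l))); last first.
      by move=> l /andP [_ /negbTE li]; rewrite ffunE li.
    by field.
  rewrite addr0; congr (_ * _); apply: eq_bigr => l /eqP ll.
  rewrite /s' ffunE; case: eqP => // li; exfalso; move: jk; by rewrite -ll li lik eqxx.
rewrite negb_exists => /forallP H.
have : gamma R lam s k = x k.
  rewrite /gamma ffunE (eq_bigr (fun _ => x k)).
    by rewrite sum_const_cls mulrA mulVf ?cls_neq0 // mul1r.
  by move=> i /eqP lik; move: (H i); rewrite lik eqxx /= negbK => /eqP.
rewrite -zs => zk.
by move: apos; rewrite /a zk xsq subrr mulr0 mul0r truncn0.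
Qed.


Lemma xspb k b : x k * sp b = 1 \/ x k * sp b = -1.
Proof. by case: (xpm k) => ->; case: (spin_pm b) => ->; rewrite ?mulr1 ?mulrN1 ?opprK; auto. Qed.

Lemma xspb_cases k : exists b, x k * sp b = 1 /\ x k * sp (~~ b) = -1.
Proof.
case: (xpm k) => ->; [exists true | exists false]; rewrite /= ?mulr1 ?mulrN1 ?opprK //.
Qed.

Lemma sum_bool_split (F : bool -> R) b : \sum_(c : bool) F c = F b + F (~~ b).
Proof. by rewrite big_bool; case: b => //=; rewrite addrC. Qed.

Lemma D0 z : z \in GG -> D z = 0%N -> z = x.
Proof.
move=> zG Dz; apply/ffunP => k.
have ak : a z k = 0%N by have := D_split z k; lia.
case: (aE k zG); rewrite ak => /esym E _.
have L0 := cls_neq0 k.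
have e1 : x k * z k = 1.
  have : (L k)%:R * (1 - x k * z k) = 0.
    have -> : (L k)%:R * (1 - x k * z k) = 2 * ((L k)%:R * (1 - x k * z k) / 2) by field.
    by rewrite E mulr0n mulr0.
  by move/eqP; rewrite mulf_eq0 (negbTE L0) /= subr_eq0 => /eqP <-.
by rewrite -[z k]mul1r -(xsq k) -mulrA e1 mulr1.
Qed.

Lemma Cn_x : Cn x = 1%N.
Proof. by rewrite /Cn big1 // => k _; rewrite a_x bin0. Qed.

Lemma ZERO t z : z \in GG -> (t < D z)%N -> rNn lam t x z = 0.
Proof.
elim: t z => [|t IH] z zG lt.
  by rewrite /=; case: eqP => // xz; move: lt; rewrite -xz D_x ltnn.
rewrite CK ?xG // (STEP (fun y => rNn lam t x y)).
rewrite big1 // => k _; rewrite big1 // => b _.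
case: ifP => // wG; rewrite IH ?mul0r //.
case: (xspb k b) => e.
  by rewrite (D_far (a_far zG wG e)); lia.
by have := D_near (a_near zG wG e); lia.
Qed.

Lemma EQ t z : z \in GG -> D z = t -> rNn lam t x z = t`!%:R / N%:R ^+ t * (Cn z)%:R.
Proof.
elim: t z => [|t IH] z zG Dz.
  by rewrite (D0 zG Dz) /= eqxx Cn_x expr0 !divr1 mulr1.
rewrite CK ?xG // (STEP (fun y => rNn lam t x y)).
rewrite (eq_bigr (fun k => t`!%:R / N%:R ^+ t.+1 * (Cn z)%:R * (a z k)%:R)); last first.
  move=> k _; have [b [ef en]] := xspb_cases k; rewrite (sum_bool_split _ b).
  have -> : (if wk z k b \in GG then rNn lam t x (wk z k b) * pk k b (wk z k b) else 0) = 0.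
    case: ifP => // wG; rewrite ZERO ?mul0r //.
    by rewrite (D_far (a_far zG wG ef)) Dz.
  rewrite add0r.
  case: (posnP (a z k)) => [a0|apos].
    case: ifP => [wG|_]; last by rewrite a0 mulr0.
    by have := a_near zG wG en; rewrite a0.
  have wG := near_in zG en apos.
  rewrite wG (pk_near wG en) IH //; last by have := D_near (a_near zG wG en); lia.
  rewrite -[in RHS]mulrA -[in RHS]natrM -(Cn_near (a_near zG wG en)) natrM exprS invfM; ring.
rewrite -mulr_sumr -natr_sum -/(D z) Dz factS natrM.
ring.
Qed.


Definition G m p : R := (m + 2 * p)`!%:R / ((p`!)%:R * N%:R ^+ (m + p)).

Lemma G_ge0 m p : 0 <= G m p.
Proof. by rewrite /G divr_ge0 // mulr_ge0 // exprn_ge0. Qed.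

Lemma fact_neq0 n : n`!%:R != 0 :> R.
Proof. by rewrite pnatr_eq0 -lt0n fact_gt0. Qed.

Lemma ARITH m p : (0 < N)%N -> (0 < m + 2 * p)%N ->
  ((if p is p'.+1 then G m.+1 p' else 0) * N%:R + G m.-1 p * m%:R) / N%:R <= G m p.
Proof.
move=> Np mp.
have N0 : N%:R != 0 :> R by rewrite pnatr_eq0 -lt0n.
case: p mp => [|p'] mp.
  case: m mp => [//|m'] _ /=.
  rewrite /G !muln0 !addn0 factS natrM exprS mul0r add0r fact0 mul1r.
  have E0 : N%:R ^+ m' != 0 :> R by apply: expf_neq0.
  have F0 := fact_neq0 m'.
  rewrite le_eqVlt; apply/orP; left; apply/eqP; field; rewrite ?E0 ?F0 ?N0 //.
case: m mp => [|m'] _ /=.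
  rewrite mulr0 addr0 mulfK //.
  rewrite /G !add0n.
  have -> : (1 + 2 * p' = (2 * p').+1)%N by lia.
  have -> : (2 * p'.+1 = (2 * p').+2)%N by lia.
  rewrite (factS (2 * p').+1) (factS p') add1n exprS natrM natrM.
  set F := ((2 * p').+1)`!%:R; set P := (p'`!)%:R; set Ne := N%:R ^+ p'.
  have E0 : Ne != 0 by apply: expf_neq0.
  have F0 : P != 0 by apply: fact_neq0.
  have e : (((2 * p').+2)%:R * F / ((p'.+1)%:R * P * (N%:R * Ne))) = 2 * (F / (P * (N%:R * Ne))) :> R.
    have -> : ((2 * p').+2)%:R = 2 * (p'.+1)%:R :> R by rewrite -natrM; congr (_%:R); lia.
    field; by rewrite E0 N0 fact_neq0 /= [1 + _]addrC natr1 pnatr_eq0.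
  rewrite e; have h : 0 <= F / (P * (N%:R * Ne)) by rewrite divr_ge0 // mulr_ge0 // mulr_ge0 // exprn_ge0.
  lra.
rewrite /G.
have e1 : (m'.+2 + 2 * p' = m' + 2 * p'.+1)%N by lia.
have e2 : (m'.+1 + 2 * p'.+1 = (m' + 2 * p'.+1).+1)%N by lia.
have e3 : (m'.+2 + p' = (m' + p'.+1).+1)%N by lia.
have e4 : (m'.+1 + p'.+1 = (m' + p'.+1).+1)%N by lia.
rewrite e1 e2 e3 e4 (factS (m' + 2 * p'.+1)) (factS p') !exprS !natrM.
set F := (m' + 2 * p'.+1)`!%:R; set P := (p'`!)%:R; set Ne := N%:R ^+ (m' + p'.+1).
have E0 : Ne != 0 by apply: expf_neq0.
have F0 : P != 0 by apply: fact_neq0.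
have q0 : (p'.+1)%:R != 0 :> R by rewrite pnatr_eq0.
set K := F / ((p'.+1)%:R * P * (N%:R * Ne)).
have eL : (F / (P * (N%:R * Ne)) * N%:R + F / ((p'.+1)%:R * P * Ne) * (m'.+1)%:R) / N%:R
    = K * ((p'.+1)%:R + (m'.+1)%:R).
  by rewrite /K; field; rewrite E0 N0 fact_neq0 /= [1 + _]addrC natr1 pnatr_eq0.
have eR : ((m' + 2 * p'.+1).+1)%:R * F / ((p'.+1)%:R * P * (N%:R * Ne)) = K * ((m' + 2 * p'.+1).+1)%:R.
  by rewrite /K; field; rewrite E0 N0 fact_neq0 /= [1 + _]addrC natr1 pnatr_eq0.
rewrite eL eR; apply: ler_wpM2l.
  by rewrite /K divr_ge0 // !mulr_ge0 // exprn_ge0.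
by rewrite -natrD ler_nat; lia.
Qed.


Definition IHt t := forall m p, t = (m + 2 * p)%N -> forall z, z \in GG -> D z = m ->
  rNn lam t x z <= G m p * (Cn z)%:R.

Lemma far_step t m p z k b : IHt t ->
  t.+1 = (m + 2 * p)%N -> z \in GG -> D z = m -> x k * sp b = 1 ->
  (if wk z k b \in GG then rNn lam t x (wk z k b) * pk k b (wk z k b) else 0)
   <= (if p is p'.+1 then G m.+1 p' else 0) * (L k - a z k)%:R * ((Cn z)%:R / N%:R).
Proof.
move=> IH tE zG Dz ef.
have c1ge : 0 <= (if p is p'.+1 then G m.+1 p' else 0) by case: (p) => [|p']; rewrite ?lexx ?G_ge0.
have Y : 0 <= (Cn z)%:R / N%:R :> R by rewrite divr_ge0.
case: ifP => wG; last by apply: mulr_ge0 => //; apply: mulr_ge0.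
have aw := a_far zG wG ef; have Dw := D_far aw.
rewrite (pk_far wG ef).
case: p tE c1ge => [|p'] tE _.
  by rewrite ZERO ?mul0r // Dw Dz; lia.
have H := IH m.+1 p' (ltac:(lia)) _ wG (ltac:(by rewrite Dw Dz)).
apply: le_trans (ler_wpM2r _ H) _; first by rewrite divr_ge0.
have hc : (Cn (wk z k b))%:R * (a (wk z k b) k)%:R = (Cn z)%:R * (L k - a z k)%:R :> R.
  by rewrite -!natrM Cn_far.
rewrite le_eqVlt; apply/orP; left; apply/eqP.
transitivity (G m.+1 p' * ((Cn (wk z k b))%:R * (a (wk z k b) k)%:R) / N%:R); first by ring.
by rewrite hc; ring.
Qed.

Lemma near_step t m p z k b : IHt t ->
  t.+1 = (m + 2 * p)%N -> z \in GG -> D z = m -> x k * sp b = -1 ->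
  (if wk z k b \in GG then rNn lam t x (wk z k b) * pk k b (wk z k b) else 0)
   <= G m.-1 p * (a z k)%:R * ((Cn z)%:R / N%:R).
Proof.
move=> IH tE zG Dz e.
have Y : 0 <= (Cn z)%:R / N%:R :> R by rewrite divr_ge0.
case: ifP => wG; last by apply: mulr_ge0 => //; apply: mulr_ge0; rewrite ?G_ge0.
have an := a_near zG wG e; have Dn := D_near an.
have H := IH (D (wk z k b)) p (ltac:(lia)) _ wG erefl.
rewrite (pk_near wG e).
apply: le_trans (ler_wpM2r _ H) _; first by rewrite divr_ge0.
have hc : (Cn (wk z k b))%:R * (L k - a (wk z k b) k)%:R = (Cn z)%:R * (a z k)%:R :> R.
  by rewrite -!natrM Cn_near.
rewrite -Dz -Dn /=.
rewrite le_eqVlt; apply/orP; left; apply/eqP.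
transitivity (G (D (wk z k b)) p * ((Cn (wk z k b))%:R * (L k - a (wk z k b) k)%:R) / N%:R); first by ring.
by rewrite hc; ring.
Qed.

Lemma BOUND t : IHt t.
Proof.
rewrite /IHt; elim: t => [|t IH] m p tE z zG Dz.
  have m0 : m = 0%N by lia.
  have p0 : p = 0%N by lia.
  rewrite m0 in Dz; rewrite m0 p0 (D0 zG Dz) /= eqxx Cn_x /G /= expr0 !mulr1 divr1 //.
rewrite CK ?xG // (STEP (fun y => rNn lam t x y)).
pose c1 := (if p is p'.+1 then G m.+1 p' else 0).
pose c2 := G m.-1 p.
pose Y : R := (Cn z)%:R / N%:R.
have H1 : \sum_k (c1 * (L k - a z k)%:R * Y + c2 * (a z k)%:R * Y) <= G m p * (Cn z)%:R; last first.
  apply: le_trans H1.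
  apply: ler_sum => k _; have [b [ef en]] := xspb_cases k; rewrite (sum_bool_split _ b).
  by apply: lerD; [exact: (far_step IH) | exact: (near_step IH)].
have c1ge : 0 <= c1 by rewrite /c1; case: (p) => [|p']; rewrite ?lexx ?G_ge0.
rewrite big_split /= -!mulr_suml -!mulr_sumr -!natr_sum -/(D z) Dz.
case: (posnP N) => [N0|Np].
  rewrite /Y (_ : N%:R = 0 :> R); last by rewrite N0.
  by rewrite invr0 !mulr0 addr0 mulr_ge0 ?G_ge0.
have Sle : (\sum_k (L k - a z k) <= N)%N.
  apply: (@leq_trans (\sum_k L k)); last by rewrite sum_cls.
  by apply: leq_sum => k _; apply: leq_subr.
have Yge : 0 <= Y by rewrite /Y divr_ge0.
apply: (@le_trans _ _ (c1 * N%:R * Y + c2 * m%:R * Y)).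
  by rewrite lerD2r ler_wpM2r // ler_wpM2l // ler_nat.
have -> : c1 * N%:R * Y + c2 * m%:R * Y = ((c1 * N%:R + c2 * m%:R) / N%:R) * (Cn z)%:R.
  by rewrite /Y; ring.
by rewrite ler_wpM2r // ARITH //; lia.
Qed.

End Gen.

Unset Implicit Arguments.
Set Strict Implicit.

Theorem lemma3p13 (R : archiRealFieldType) (N d : nat) (lam : 'I_N -> 'I_d)
  (Hpart : forall k : 'I_d, exists i : 'I_N, lam i = k) :
  (forall (n : nat), (0 < n <= N)%N ->
     forall x z : {ffun 'I_d -> R},
       inSd x -> z \in GammaNd R lam -> distN lam x z = n%:R ->
       rNn lam n x z
         = (n`!)%:R / (N%:R ^+ n) * (QN lam z / QN lam x))
  /\
  (forall (n m p : nat), (1 <= m)%N -> (n + 2 = m + 2 * p)%N ->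
     forall x z : {ffun 'I_d -> R},
       inSd x -> z \in GammaNd R lam -> distN lam x z = m%:R ->
       rNn lam n.+2 x z
         <= rNn lam m x z * (N%:R ^+ p)^-1
              * ((m + 2 * p)`!)%:R / ((m`!)%:R * (p`!)%:R)).
Proof.
have h2 : (2%:R ^+ N : R) != 0 by rewrite expf_neq0 // pnatr_eq0.
have getD : forall (x z : {ffun 'I_d -> R}) n, inSd x -> z \in GammaNd R lam ->
    distN lam x z = n%:R -> D lam x z = n.
  move=> x z n hx zG; rewrite (distE Hpart hx zG) => /eqP; rewrite eqr_nat => /eqP //.
have ratio : forall (x z : {ffun 'I_d -> R}), inSd x -> z \in GammaNd R lam ->
    QN lam z / QN lam x = (Cn lam x z)%:R.
  move=> x z hx zG; rewrite (QNE Hpart hx zG) (QNE Hpart hx (xG Hpart hx)) (Cn_x lam hx).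
  by field.
split.
  move=> n _ x z hx zG dz.
  by rewrite (EQ Hpart hx zG (getD _ _ _ hx zG dz)) ratio.
move=> n m p m1 e x z hx zG dz.
have Dz := getD _ _ _ hx zG dz.
have Np : (0 < N)%N.
  case: (pickP (fun _ : 'I_d => true)) => [k _|h].
    by case: (Hpart k) => i _; apply: (leq_trans _ (ltn_ord i)).
  by move: m1; rewrite -Dz /D big1 // => k; have := h k.
have N0 : N%:R != 0 :> R by rewrite pnatr_eq0 -lt0n.
apply: le_trans (BOUND Hpart hx (_ : n.+2 = m + 2 * p)%N zG Dz) _; first by lia.
rewrite (EQ Hpart hx zG Dz).
rewrite le_eqVlt; apply/orP; left; apply/eqP.
rewrite /G exprD; field.
by rewrite !expf_neq0 // !fact_neq0.
Qed.
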